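(* Let $\mathcal{M}$ be either $\mathcal{M}^{inj}$ or $\mathcal{M}^{gen}$. A clustering functor $\mathfrak{C}$ on $\mathcal{M}$ is excisive if and only if it is representable.
   Context: $\mathcal{M}^{gen}$ is the category whose objects are finite metric spaces and whose morphisms $f:(X,d_X)\to(Y,d_Y)$ are distance non-increasing maps ($d_Y(f(x),f(x'))\leq d_X(x,x')$ for all $x,x'$); $\mathcal{M}^{inj}$ has the same objects and as morphisms the injective distance non-increasing maps. For a set map $f:X\to Y$ and a partition $P_Y$ of $Y$, $f^*(P_Y)$ is the partition of $X$ whose blocks are the nonempty sets $f^{-1}(B)$, $B$ a block of $P_Y$. A clustering functor on $\mathcal{M}$ is a rule $\mathfrak{C}$ assigning to every finite metric space $(X,d_X)$ a partition $\mathfrak{C}(X,d_X)$ of $X$ such that for every morphism $f:(X,d_X)\to(Y,d_Y)$ in $\mathcal{M}$, $\mathfrak{C}(X,d_X)$ refines $f^*(\mathfrak{C}(Y,d_Y))$. $\mathfrak{C}$ is excisive if for every finite metric space $(X,d_X)$ and every block $B$ of $\mathfrak{C}(X,d_X)$, $\mathfrak{C}(B,d_X|_{B\times B})$ is the partition of $B$ with the single block $B$. For a collection $\Omega$ of finite metric spaces, $\mathfrak{C}^\Omega$ is the clustering functor on $\mathcal{M}$ defined as follows: for a finite metric space $X$, points $x,x'\in X$ lie in the same block of $\mathfrak{C}^\Omega(X)$ iff there exist $z_0,\ldots,z_k\in X$ with $z_0=x$, $z_k=x'$, spaces $\omega_1,\ldots,\omega_k\in\Omega$, points $\alpha_i,\beta_i\in\omega_i$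 and morphisms $f_i\in\mathrm{Mor}_{\mathcal{M}}(\omega_i,X)$ with $f_i(\alpha_i)=z_{i-1}$ and $f_i(\beta_i)=z_i$ for $i=1,\ldots,k$. $\mathfrak{C}$ is representable if $\mathfrak{C}=\mathfrak{C}^\Omega$ (i.e. they give the same partition of every finite metric space) for some collection $\Omega$ of finite metric spaces. *)

(* Defs.v *)
From Stdlib Require Import Reals.
From mathcomp Require Import all_boot.

Set Implicit Arguments.
Unset Strict Implicit.
Unset Printing Implicit Defensive.

Record FMS := {
  fms_car :> finType;
  fms_d : fms_car -> fms_car -> R;
  fms_d0 : forall x y, fms_d x y = R0 <-> x = y;
  fms_sym : forall x y, fms_d x y = fms_d y x;
  fms_tri : forall x y z, Rle (fms_d x z) (Rplus (fms_d x y) (fms_d y z))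
}.

Inductive MCat := Minj | Mgen.

Definition is_morphism (M : MCat) (X Y : FMS) (f : X -> Y) : Prop :=
  (forall x x' : X, Rle (fms_d (f x) (f x')) (fms_d x x')) /\
  (M = Minj -> injective f).

Definition clustering_rule := forall X : FMS, {set {set X}}.

Definition pullback (T U : finType) (f : T -> U) (P : {set {set U}}) : {set {set T}} :=
  [set f @^-1: B | B : {set U} in P] :\ set0.

Definition refines (T : finType) (P Q : {set {set T}}) : Prop :=
  forall A, A \in P -> exists2 B, B \in Q & A \subset B.

Definition is_clustering_functor (M : MCat) (C : clustering_rule) : Prop :=
  (forall X : FMS, partition (C X) [set: X]) /\
  (forall (X Y : FMS) (f : X -> Y), is_morphism M f ->
      refines (C X) (pullback f (C Y))).

Definition subFMS (X : FMS) (B : {set X}) : FMS.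
Proof.
refine (@Build_FMS {x : X | x \in B} (fun x y => fms_d (val x) (val y)) _ _ _).
- move=> x y; split => [/fms_d0 /val_inj //|->]; exact/fms_d0.
- move=> x y; exact: fms_sym.
- move=> x y z; exact: fms_tri.
Defined.

Definition excisive (C : clustering_rule) : Prop :=
  forall (X : FMS) (B : {set X}), B \in C X ->
    C (subFMS B) = [set [set: subFMS B]].

Definition omega_step (M : MCat) (Omega : FMS -> Prop) (X : FMS) (z z' : X) : Prop :=
  exists (w : FMS) (a b : w) (f : w -> X),
    Omega w /\ is_morphism M f /\ f a = z /\ f b = z'.

Inductive omega_chain (M : MCat) (Omega : FMS -> Prop) (X : FMS) : X -> X -> Prop :=
  | oc_refl x : omega_chain M Omega x x
  | oc_step x y z : omega_step M Omega x y -> omega_chain M Omega y z ->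
                    omega_chain M Omega x z.

Definition same_block (T : finType) (P : {set {set T}}) (x x' : T) : Prop :=
  exists2 A, A \in P & (x \in A) && (x' \in A).

(* C = C^Omega for some collection Omega: same blocks on every space. *)
Definition representable (M : MCat) (C : clustering_rule) : Prop :=
  exists Omega : FMS -> Prop,
    forall (X : FMS) (x x' : X), same_block (C X) x x' <-> omega_chain M Omega x x'.

(* Main.v *)
Require Import Defs.
From Stdlib Require Import Reals.
From mathcomp Require Import all_boot.

Set Implicit Arguments.
Unset Strict Implicit.
Unset Printing Implicit Defensive.

Lemma same_block_pblock (T : finType) (P : {set {set T}}) (x y : T) :
  partition P [set: T] -> same_block P x y <-> y \in pblock P x.
Proof.
move=> /and3P [/eqP cov tI _]; split.
- by case=> A AP /andP [xA yA]; rewrite (def_pblock tI AP xA).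
- move=> yb; exists (pblock P x); last by rewrite yb mem_pblock cov in_setT.
  by apply: pblock_mem; rewrite cov in_setT.
Qed.

Lemma all_same_block (T : finType) (P : {set {set T}}) (t : T) :
  partition P [set: T] -> (forall x y, same_block P x y) -> P = [set [set: T]].
Proof.
move=> Pp Hall; have /and3P [/eqP cov tI n0] := Pp.
have full : forall A, A \in P -> A = [set: T].
  move=> A AP; apply/setP => y; rewrite in_setT.
  have : A != set0 by apply: contraNneq n0 => <-.
  case/set0Pn => a aA.
  have := Hall a y; rewrite same_block_pblock //.
  by rewrite (def_pblock tI AP aA).
apply/setP => A; rewrite in_set1; apply/idP/eqP => [/full //|->].
have tc : t \in cover P by rewrite cov in_setT.
by rewrite -(full _ (pblock_mem tc)); apply: pblock_mem.
Qed.

Lemma val_morph (M : MCat) (X : FMS) (B : {set X}) :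
  is_morphism M (fun x : subFMS B => val x).
Proof. split => [x x'|_]; [exact: Rle_refl | exact: val_inj]. Qed.

Lemma pblock_trans (T : finType) (P : {set {set T}}) (x y z : T) :
  partition P [set: T] -> y \in pblock P x -> z \in pblock P y -> z \in pblock P x.
Proof.
move=> Pp /[dup] yx; have /and3P [/eqP cov tI _] := Pp.
have xc : x \in cover P by rewrite cov in_setT.
by rewrite (def_pblock tI (pblock_mem xc) yx).
Qed.

Theorem mainTheorem3 (M : MCat) (C : clustering_rule) :
  is_clustering_functor M C -> (excisive C <-> representable M C).
Proof.
case=> Cpart Cref; split.
- move=> Exc.
  exists (fun w : FMS => forall a b : w, same_block (C w) a b).
  move=> X x x'; split.
  + case=> A AX /andP [xA x'A].
    apply: (@oc_step _ _ _ x x' x'); last exact: oc_refl.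
    exists (subFMS A), (Sub x xA), (Sub x' x'A), (fun u => val u).
    split; last split; [|exact: val_morph|by []].
    move=> a b; rewrite (Exc X A AX); exists [set: subFMS A];
      by rewrite ?in_set1 ?in_setT.
  + elim=> [y|y y' z [w [a [b [f [Ow [fm [fa fb]]]]]]] _ IH].
    * apply/same_block_pblock => //; rewrite mem_pblock.
      by have /and3P [/eqP -> _ _] := Cpart X; rewrite in_setT.
    * apply/same_block_pblock => //.
      move/(same_block_pblock _ _ (Cpart X)): IH; apply: pblock_trans => //.
      apply/same_block_pblock => //.
      case: (Ow a b) => A AC /andP [aA bA].
      case: (Cref _ _ f fm A AC) => B' + AB'.
      rewrite in_setD1 => /andP [_ /imsetP [B BC defB']].
      move: AB'; rewrite defB' => /subsetP AB.
      exists B => //; rewrite -fa -fb.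
      have := AB a aA; have := AB b bA; by rewrite !inE => -> ->.
- case=> Om Heq X B BC.
  have stepB : forall (u : X) v, u \in B -> omega_step M Om u v -> v \in B.
    move=> u v uB st.
    have : same_block (C X) u v by apply/Heq; apply: oc_step st (oc_refl _ _ _).
    rewrite same_block_pblock //.
    have /and3P [_ tI _] := Cpart X.
    by rewrite (def_pblock tI BC uB).
  have lift : forall (x z : X), omega_chain M Om x z ->
      forall a : subFMS B, val a = x ->
      exists b : subFMS B, val b = z /\ omega_chain M Om a b.
    move=> x z; elim=> [y a ay|y y' z' [w [al [be [f [Ow [fm [fa fb]]]]]]] _ IH a ay].
      by exists a; split => //; apply: oc_refl.
    have fB : forall c, f c \in B.
      move=> c; apply: (stepB y); first by rewrite -ay; exact: valP.
      by exists w, al, c, f; split; last split; last split.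
    pose f' := fun c => (Sub (f c) (fB c) : subFMS B).
    have [b [bz ch]] := IH (f' be) fb.
    exists b; split => //; apply: (oc_step _ ch).
    exists w, al, be, f'; split => //; split; last split => //.
      case: fm => fd fi; split => [c c'|/fi fin c c' /(congr1 val) /fin //].
      exact: fd.
    by apply: val_inj; rewrite /= fa.
  have /and3P [_ _ n0] := Cpart X.
  have : B != set0 by apply: contraNneq n0 => <-.
  case/set0Pn => t tB.
  apply: (all_same_block (Sub t tB : subFMS B)); first exact: Cpart.
  move=> a b; apply/Heq.
  have : same_block (C X) (val a) (val b) by exists B => //; apply/andP; split; apply: valP.
  move/Heq => ch; have [b' [bb' ch']] := lift _ _ ch a erefl.
  by have -> : b = b' by apply: val_inj.
Qed.
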